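(* Let $\beta\ge0$ be an integer, $x_0,y_0\in\mathbb{R}$, $a,b>0$, and $\Upsilon=[x_0-a,x_0+a]\times[y_0-b,y_0+b]$. Let $f:\Upsilon\to\mathbb{R}$ be continuous such that all partial derivatives $D^pf$ with $[p]=p_1+p_2\le\beta$ exist, $|D^pf(x,y)|\le1$ for all $(x,y)\in\Upsilon$ and all $p$ with $[p]\le\beta$ (with $D^0f=f$), and $$|D^pf(x,y)-D^pf(x',\tilde y)|\le\max\{|x-x'|,|y-\tilde y|\}\quad\text{for all }(x,y),(x',\tilde y)\in\Upsilon,\ [p]=\beta.$$ Let $y$ be a solution of $y'(x)=f(x,y(x))$, $y(x_0)=y_0$, on $[x_0-a,x_0+a]$ with $(x,y(x))\in\Upsilon$, and let $\alpha=a\wedge b$. Then for all $x,x'\in[x_0-\alpha,x_0+\alpha]$: $|y^{(k)}(x)|\le2^{k-1}(k-1)!$ for every $1\le k\le\beta+1$, and $$|y^{(\beta+1)}(x)-y^{(\beta+1)}(x')|\le2^{\beta+1}(\beta+1)!\,|x-x'|.$$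
   Context: For a multi-index $p=(p_1,p_2)$ of non-negative integers, $[p]=p_1+p_2$ and $D^pf=\partial^{[p]}f/\partial x^{p_1}\partial y^{p_2}$. *)

(* Defs.v *)
From Stdlib Require Import Reals Lra List.
Open Scope R_scope.

Definition cint (c r : R) (t : R) : Prop := c - r <= t <= c + r.

Definition rect (x0 y0 a b : R) (x y : R) : Prop := cint x0 a x /\ cint y0 b y.

Definition has_deriv_within (I : R -> Prop) (g : R -> R) (t l : R) : Prop :=
  forall eps : R, 0 < eps -> exists delta : R, 0 < delta /\
    forall h : R, h <> 0 -> Rabs h < delta -> I (t + h) ->
      Rabs ((g (t + h) - g t) / h - l) < eps.

Definition cont_on_rect (x0 y0 a b : R) (f : R -> R -> R) : Prop :=
  forall x y, rect x0 y0 a b x y ->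
  forall eps, 0 < eps -> exists delta, 0 < delta /\
    forall x' y', rect x0 y0 a b x' y' ->
      Rmax (Rabs (x' - x)) (Rabs (y' - y)) < delta ->
      Rabs (f x' y' - f x y) < eps.

(* Family of iterated partial derivatives of f on the rectangle, up to order
   beta, indexed by words over {x,y}: true = d/dx, false = d/dy. *)
Definition partials_family (x0 y0 a b : R) (beta : nat) (f : R -> R -> R)
  (G : list bool -> R -> R -> R) : Prop :=
  (forall x y, rect x0 y0 a b x y -> G nil x y = f x y) /\
  (forall w, (length w < beta)%nat -> forall x y, rect x0 y0 a b x y ->
     has_deriv_within (cint x0 a) (fun s => G w s y) x (G (true :: w) x y) /\
     has_deriv_within (cint y0 b) (fun s => G w x s) y (G (false :: w) x y)).

(* Main.v *)
Require Import Defs.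
From Stdlib Require Import Reals List Arith Factorial Lra Lia.
Open Scope R_scope.

Definition ext (p q : R) (g : R -> R) (lp lq : R) (s : R) : R :=
  if Rlt_dec s p then g p + lp * (s - p)
  else if Rlt_dec q s then g q + lq * (s - q) else g s.

Lemma ext_in p q g lp lq s : p <= s <= q -> ext p q g lp lq s = g s.
Proof.
  intros H; unfold ext.
  destruct (Rlt_dec s p); [lra|]. destruct (Rlt_dec q s); [lra|]. reflexivity.
Qed.

Lemma ext_deriv p q g t l lp lq : p <= t <= q ->
  has_deriv_within (fun s => p <= s <= q) g t l ->
  (t = p -> lp = l) -> (t = q -> lq = l) ->
  derivable_pt_lim (ext p q g lp lq) t l.
Proof.
  intros Ht Hd Hp Hq eps Heps.
  destruct (Hd eps Heps) as [d0 [Hd0 Hd0']].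
  assert (Hdl : exists dl, 0 < dl /\ (t <> p -> dl <= t - p)).
  { destruct (Req_dec t p). exists 1; split; [lra| intros; contradiction].
    exists (t - p); split; lra. }
  assert (Hdr : exists dr, 0 < dr /\ (t <> q -> dr <= q - t)).
  { destruct (Req_dec t q). exists 1; split; [lra| intros; contradiction].
    exists (q - t); split; lra. }
  destruct Hdl as [dl [Hdl Hdl']]. destruct Hdr as [dr [Hdr Hdr']].
  assert (Hpos : 0 < Rmin d0 (Rmin dl dr)) by (repeat apply Rmin_glb_lt; lra).
  exists (mkposreal _ Hpos). simpl. intros h Hh Hhd.
  pose proof (Rmin_l d0 (Rmin dl dr)). pose proof (Rmin_r d0 (Rmin dl dr)).
  pose proof (Rmin_l dl dr). pose proof (Rmin_r dl dr).
  rewrite (ext_in p q g lp lq t Ht).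
  pose proof (Rabs_le_lt_strict := Rabs_def2 h).
  assert (Hab : - Rmin d0 (Rmin dl dr) < h < Rmin d0 (Rmin dl dr)).
  { split; [apply Ropp_lt_cancel; rewrite Ropp_involutive|];
    apply Rle_lt_trans with (Rabs h); auto;
    [rewrite <- Rabs_Ropp; apply RRle_abs| apply RRle_abs]. }
  unfold ext.
  destruct (Rlt_dec (t + h) p) as [Hlt|Hnlt].
  - destruct (Req_dec t p) as [E|E].
    + subst t. rewrite (Hp eq_refl).
      replace ((g p + l * (p + h - p) - g p) / h - l) with 0 by (field; auto).
      rewrite Rabs_R0; lra.
    + specialize (Hdl' E). lra.
  - destruct (Rlt_dec q (t + h)) as [Hlt2|Hnlt2].
    + destruct (Req_dec t q) as [E|E].
      * subst t. rewrite (Hq eq_refl).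
        replace ((g q + l * (q + h - q) - g q) / h - l) with 0 by (field; auto).
        rewrite Rabs_R0; lra.
      * specialize (Hdr' E). lra.
    + apply Hd0'; auto. apply Rlt_le_trans with (1 := proj1 (conj (Rle_lt_trans _ _ _ (Rle_refl _) Hhd) I)); lra.
      lra.
Qed.

Lemma restrict_deriv (F g : R -> R) (I : R -> Prop) t l :
  derivable_pt_lim F t l -> (forall s, I s -> F s = g s) -> I t ->
  has_deriv_within I g t l.
Proof.
  intros HF HE It eps Heps. destruct (HF eps Heps) as [d Hd].
  exists d; split; [apply cond_pos|]. intros h Hh Hhd Ih.
  rewrite <- (HE _ Ih), <- (HE _ It). apply Hd; auto.
Qed.

Lemma hdw_mono (I J : R -> Prop) g t l :
  (forall s, J s -> I s) -> has_deriv_within I g t l -> has_deriv_within J g t l.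
Proof.
  intros HIJ H eps Heps. destruct (H eps Heps) as [d [Hd Hd']].
  exists d; split; auto.
Qed.

Lemma hdw_ext (I : R -> Prop) g1 g2 t l1 l2 :
  (forall s, g1 s = g2 s) -> l1 = l2 -> has_deriv_within I g1 t l1 -> has_deriv_within I g2 t l2.
Proof.
  intros He El H eps Heps. destruct (H eps Heps) as [d [Hd Hd']].
  exists d; split; auto. intros. rewrite <- !He, <- El. auto.
Qed.

Lemma hdw_mult p q g1 g2 t l1 l2 : p <= t <= q ->
  has_deriv_within (fun s => p <= s <= q) g1 t l1 ->
  has_deriv_within (fun s => p <= s <= q) g2 t l2 ->
  has_deriv_within (fun s => p <= s <= q) (fun s => g1 s * g2 s) t (l1 * g2 t + g1 t * l2).
Proof.
  intros Ht H1 H2.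
  pose proof (ext_deriv p q g1 t l1 l1 l1 Ht H1 (fun _ => eq_refl) (fun _ => eq_refl)) as E1.
  pose proof (ext_deriv p q g2 t l2 l2 l2 Ht H2 (fun _ => eq_refl) (fun _ => eq_refl)) as E2.
  pose proof (derivable_pt_lim_mult _ _ _ _ _ E1 E2) as E.
  rewrite !(ext_in p q _ _ _ t Ht) in E.
  apply (restrict_deriv _ _ _ _ _ E); auto.
  intros s Hs. unfold mult_fct. rewrite !(ext_in p q _ _ _ s Hs). reflexivity.
Qed.

Lemma hdw_plus (I : R -> Prop) g1 g2 t l1 l2 :
  has_deriv_within I g1 t l1 -> has_deriv_within I g2 t l2 ->
  has_deriv_within I (fun s => g1 s + g2 s) t (l1 + l2).
Proof.
  intros H1 H2 eps Heps.
  destruct (H1 (eps/2)) as [d1 [Hd1 Hd1']]; [lra|].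
  destruct (H2 (eps/2)) as [d2 [Hd2 Hd2']]; [lra|].
  exists (Rmin d1 d2); split; [apply Rmin_glb_lt; auto|].
  intros h Hh Hhd Ih.
  pose proof (Rmin_l d1 d2). pose proof (Rmin_r d1 d2).
  specialize (Hd1' h Hh ltac:(lra) Ih). specialize (Hd2' h Hh ltac:(lra) Ih).
  replace ((g1 (t + h) + g2 (t + h) - (g1 t + g2 t)) / h - (l1 + l2))
    with (((g1 (t + h) - g1 t) / h - l1) + ((g2 (t + h) - g2 t) / h - l2)) by (field; auto).
  eapply Rle_lt_trans; [apply Rabs_triang|]. lra.
Qed.

Lemma hdw_const (I : R -> Prop) c t : has_deriv_within I (fun _ => c) t 0.
Proof.
  intros eps Heps. exists 1; split; [lra|]. intros h Hh _ _.
  replace ((c - c) / h - 0) with 0 by (field; auto). rewrite Rabs_R0; lra.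
Qed.

Lemma mvt_strict g g' C E t0 t1 : t0 < t1 ->
  (forall s, t0 <= s <= t1 -> has_deriv_within (fun u => t0 <= u <= t1) g s (g' s)) ->
  (forall s, t0 <= s <= t1 -> Rabs (g' s - C) <= E) ->
  Rabs (g t1 - g t0 - C * (t1 - t0)) <= E * (t1 - t0).
Proof.
  intros Hlt Hd Hb.
  destruct (MVT_cor2 (ext t0 t1 g (g' t0) (g' t1)) g' t0 t1 Hlt) as [c [Hc Hc']].
  { intros c Hc. apply ext_deriv; auto; intros ->; reflexivity. }
  rewrite !ext_in in Hc by lra. rewrite Hc.
  replace (g' c * (t1 - t0) - C * (t1 - t0)) with ((g' c - C) * (t1 - t0)) by ring.
  rewrite Rabs_mult, (Rabs_right (t1 - t0)) by lra.
  apply Rmult_le_compat_r; [lra|]. apply Hb; lra.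
Qed.

Lemma mvt_gen p q g g' C E u v : p <= u <= q -> p <= v <= q ->
  (forall s, p <= s <= q -> has_deriv_within (fun s => p <= s <= q) g s (g' s)) ->
  (forall s, Rmin u v <= s <= Rmax u v -> Rabs (g' s - C) <= E) ->
  Rabs (g v - g u - C * (v - u)) <= E * Rabs (v - u).
Proof.
  intros Hu Hv Hd Hb.
  destruct (Rtotal_order u v) as [Hlt|[Heq|Hgt]].
  - rewrite (Rabs_right (v - u)) by lra.
    apply (mvt_strict g g' C E u v); auto.
    + intros s Hs. apply hdw_mono with (I := fun s => p <= s <= q); [intros; lra|]. apply Hd; lra.
    + intros s Hs. apply Hb. rewrite Rmin_left, Rmax_right by lra. auto.
  - subst. replace (g v - g v - C * (v - v)) with 0 by ring. rewrite Rabs_R0, Rminus_diag, Rabs_R0. lra.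
  - rewrite (Rabs_left (v - u)) by lra.
    assert (H := mvt_strict g g' C E v u Hgt).
    replace (g v - g u - C * (v - u)) with (- (g u - g v - C * (u - v))) by ring.
    rewrite Rabs_Ropp. replace (E * - (v - u)) with (E * (u - v)) by ring.
    apply H.
    + intros s Hs. apply hdw_mono with (I := fun s => p <= s <= q); [intros; lra|]. apply Hd; lra.
    + intros s Hs. apply Hb. rewrite Rmin_right, Rmax_left by lra. auto.
Qed.

Definition Hyps (beta : nat) (x0 y0 a b : R) (f : R -> R -> R)
  (G : list bool -> R -> R -> R) (y : R -> R) : Prop :=
  partials_family x0 y0 a b beta f G /\
  (forall w, (length w <= beta)%nat -> forall x y', rect x0 y0 a b x y' ->
     Rabs (G w x y') <= 1) /\
  (forall w, length w = beta -> forall x y' x' y'',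
     rect x0 y0 a b x y' -> rect x0 y0 a b x' y'' ->
     Rabs (G w x y' - G w x' y'') <= Rmax (Rabs (x - x')) (Rabs (y' - y''))) /\
  (forall x, cint x0 a x -> rect x0 y0 a b x (y x)) /\
  (forall x, cint x0 a x -> has_deriv_within (cint x0 a) y x (f x (y x))).

Lemma between_abs u v s : Rmin u v <= s <= Rmax u v -> Rabs (s - u) <= Rabs (v - u).
Proof.
  intros [H1 H2]. unfold Rmin, Rmax in *.
  destruct (Rle_dec u v); unfold Rabs; destruct (Rcase_abs (s - u)); destruct (Rcase_abs (v - u)); lra.
Qed.

Lemma between_cint c r u v s : cint c r u -> cint c r v -> Rmin u v <= s <= Rmax u v -> cint c r s.
Proof.
  unfold cint, Rmin, Rmax; intros; destruct (Rle_dec u v); lra.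
Qed.

Lemma y_lip beta x0 y0 a b f G y : Hyps beta x0 y0 a b f G y ->
  forall x x', cint x0 a x -> cint x0 a x' -> Rabs (y x' - y x) <= Rabs (x' - x).
Proof.
  intros [[HG0 HGd] [Hb [HL [Hp Hd]]]] x x' Hx Hx'.
  pose proof (mvt_gen (x0 - a) (x0 + a) y (fun s => f s (y s)) 0 1 x x' Hx Hx') as M.
  replace (y x' - y x) with (y x' - y x - 0 * (x' - x)) by ring.
  rewrite <- (Rmult_1_l (Rabs (x' - x))). apply M.
  - intros s Hs. apply (Hd s Hs).
  - intros s Hs. assert (cint x0 a s) by (apply (between_cint x0 a x x' s Hx Hx' Hs)).
    rewrite Rminus_0_r, <- HG0 by auto. apply Hb; simpl; auto; lia.
Qed.

Lemma G_lip beta x0 y0 a b f G y : Hyps beta x0 y0 a b f G y ->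
  forall v, (length v <= beta)%nat -> forall x z x' z',
  rect x0 y0 a b x z -> rect x0 y0 a b x' z' ->
  Rabs (G v x' z' - G v x z) <= Rabs (x' - x) + Rabs (z' - z).
Proof.
  intros HH v Hv x z x' z' Hr Hr'.
  destruct HH as [[HG0 HGd] [Hb [HL [Hp Hd]]]].
  destruct (Nat.eq_dec (length v) beta) as [E|E].
  - eapply Rle_trans; [apply HL; eauto|].
    apply Rmax_lub; pose proof (Rabs_pos (x' - x)); pose proof (Rabs_pos (z' - z)); lra.
  - assert (Hlt : (length v < beta)%nat) by lia.
    destruct Hr as [Hx Hz]. destruct Hr' as [Hx' Hz'].
    pose proof (mvt_gen (x0 - a) (x0 + a) (fun s => G v s z) (fun s => G (true :: v) s z) 0 1 x x' Hx Hx') as M1.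
    pose proof (mvt_gen (y0 - b) (y0 + b) (fun s => G v x' s) (fun s => G (false :: v) x' s) 0 1 z z' Hz Hz') as M2.
    simpl in M1, M2.
    assert (A1 : Rabs (G v x' z - G v x z) <= Rabs (x' - x)).
    { replace (G v x' z - G v x z) with (G v x' z - G v x z - 0 * (x' - x)) by ring.
      rewrite <- (Rmult_1_l (Rabs (x' - x))). apply M1.
      - intros s Hs. apply (HGd v Hlt s z). split; auto.
      - intros s Hs. rewrite Rminus_0_r. apply Hb. simpl; lia. split; auto.
        eapply between_cint; [exact Hx| exact Hx'|]. auto. }
    assert (A2 : Rabs (G v x' z' - G v x' z) <= Rabs (z' - z)).
    { replace (G v x' z' - G v x' z) with (G v x' z' - G v x' z - 0 * (z' - z)) by ring.
      rewrite <- (Rmult_1_l (Rabs (z' - z))). apply M2.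
      - intros s Hs. apply (HGd v Hlt x' s). split; auto.
      - intros s Hs. rewrite Rminus_0_r. apply Hb. simpl; lia. split; auto.
        eapply between_cint; [exact Hz| exact Hz'|]. auto. }
    replace (G v x' z' - G v x z) with ((G v x' z' - G v x' z) + (G v x' z - G v x z)) by ring.
    eapply Rle_trans; [apply Rabs_triang|]. lra.
Qed.

Lemma chain beta x0 y0 a b f G y : Hyps beta x0 y0 a b f G y ->
  forall w, (length w < beta)%nat -> forall x, cint x0 a x ->
  has_deriv_within (cint x0 a) (fun s => G w s (y s)) x
    (G (true :: w) x (y x) + G (false :: w) x (y x) * G nil x (y x)).
Proof.
  intros HH w Hlt x Hx.
  pose proof HH as [[HG0 HGd] [Hb [HL [Hp Hd]]]].
  intros eps Heps.
  set (e1 := eps / 4).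
  assert (He1 : 0 < e1) by (unfold e1; lra).
  destruct (Hd x Hx e1 He1) as [dy [Hdy Qy]].
  destruct (proj1 (HGd w Hlt x (y x) (Hp x Hx)) e1 He1) as [dg [Hdg Qg]].
  exists (Rmin (Rmin dy dg) e1). split; [repeat apply Rmin_glb_lt; auto|].
  intros h Hh Hhd Ih.
  pose proof (Rmin_l (Rmin dy dg) e1). pose proof (Rmin_r (Rmin dy dg) e1).
  pose proof (Rmin_l dy dg). pose proof (Rmin_r dy dg).
  specialize (Qy h Hh ltac:(lra) Ih). specialize (Qg h Hh ltac:(lra) Ih).
  rewrite HG0 by auto.
  set (X := x + h) in *.
  assert (Ly : Rabs (y X - y x) <= Rabs h).
  { replace h with (X - x) by (unfold X; ring). eapply y_lip; eauto. }
  set (Gy := G (false :: w) x (y x)).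
  set (Gx := G (true :: w) x (y x)).
  set (A := G w X (y X) - G w X (y x) - Gy * (y X - y x)).
  assert (HA : Rabs A <= 2 * Rabs h * Rabs (y X - y x)).
  { destruct (Hp x Hx) as [_ Hzx]. destruct (Hp X Ih) as [_ HzX].
    apply (mvt_gen (y0 - b) (y0 + b) (fun s => G w X s) (fun s => G (false :: w) X s) Gy (2 * Rabs h) (y x) (y X) Hzx HzX).
    - intros s Hs. apply (HGd w Hlt X s). split; auto.
    - intros s Hs. unfold Gy.
      assert (Hs' : cint y0 b s) by (apply (between_cint y0 b (y x) (y X) s Hzx HzX Hs)).
      eapply Rle_trans.
      + apply (G_lip beta x0 y0 a b f G y HH (false :: w)); [simpl; lia| |]; split; auto.
      + replace (X - x) with h by (unfold X; ring).
        pose proof (between_abs _ _ _ Hs). lra. }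
  assert (HAh : Rabs (A / h) <= 2 * Rabs h).
  { assert (0 < Rabs h) by (apply Rabs_pos_lt; auto).
    unfold Rdiv. rewrite Rabs_mult, Rabs_inv.
    apply Rmult_le_reg_r with (Rabs h); auto.
    replace (Rabs A * / Rabs h * Rabs h) with (Rabs A) by (field; lra).
    pose proof (Rabs_pos h).
    eapply Rle_trans; [exact HA|]. apply Rmult_le_compat_l; lra. }
  assert (HGyb : Rabs Gy <= 1) by (apply Hb; [simpl; lia| auto]).
  replace ((G w X (y X) - G w x (y x)) / h - (Gx + Gy * f x (y x)))
    with (A / h + Gy * ((y X - y x) / h - f x (y x)) + ((G w X (y x) - G w x (y x)) / h - Gx))
    by (unfold A; field; auto).
  eapply Rle_lt_trans; [apply Rabs_triang|].
  eapply Rle_lt_trans; [apply Rplus_le_compat_r; apply Rabs_triang|].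
  rewrite Rabs_mult.
  assert (Rabs Gy * Rabs ((y X - y x) / h - f x (y x)) <= Rabs ((y X - y x) / h - f x (y x))).
  { rewrite <- (Rmult_1_l (Rabs ((y X - y x) / h - f x (y x)))) at 2.
    apply Rmult_le_compat_r; auto. apply Rabs_pos. }
  assert (Rabs h < e1) by lra.
  fold Gx in Qg. unfold e1 in *. lra.
Qed.

Fixpoint evalM (G : list bool -> R -> R -> R) (m : list (list bool)) x z : R :=
  match m with nil => 1 | w :: m' => G w x z * evalM G m' x z end.
Fixpoint evalP (G : list bool -> R -> R -> R) (P : list (list (list bool))) x z : R :=
  match P with nil => 0 | m :: P' => evalM G m x z + evalP G P' x z end.
Fixpoint dmono (m : list (list bool)) : list (list (list bool)) :=
  match m with
  | nil => nil
  | w :: m' => ((true :: w) :: m') :: ((false :: w) :: nil :: m') :: map (cons w) (dmono m')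
  end.
Fixpoint dpoly (P : list (list (list bool))) : list (list (list bool)) :=
  match P with nil => nil | m :: P' => dmono m ++ dpoly P' end.
Fixpoint Pk (k : nat) : list (list (list bool)) :=
  match k with O => (nil :: nil) :: nil | S k => dpoly (Pk k) end.

Lemma evalP_app G P Q x z : evalP G (P ++ Q) x z = evalP G P x z + evalP G Q x z.
Proof. induction P; simpl; [ring| rewrite IHP; ring]. Qed.

Lemma evalP_map_cons G w P x z : evalP G (map (cons w) P) x z = G w x z * evalP G P x z.
Proof. induction P; simpl; [ring| rewrite IHP; ring]. Qed.

Lemma deriv_mono beta x0 y0 a b f G y : Hyps beta x0 y0 a b f G y ->
  forall m, (forall w, In w m -> (length w < beta)%nat) -> forall x, cint x0 a x ->
  has_deriv_within (cint x0 a) (fun s => evalM G m s (y s)) x (evalP G (dmono m) x (y x)).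
Proof.
  intros HH m; induction m as [|w m IH]; intros Hm x Hx.
  - simpl. apply hdw_const.
  - pose proof (chain beta x0 y0 a b f G y HH w (Hm w (or_introl eq_refl)) x Hx) as Hc.
    assert (IH' := IH (fun w' Hw' => Hm w' (or_intror Hw')) x Hx).
    pose proof (hdw_mult (x0 - a) (x0 + a) _ _ x _ _ Hx Hc IH') as M.
    eapply hdw_ext; [| |exact M].
    + intros s; reflexivity.
    + simpl. rewrite evalP_map_cons. ring.
Qed.

Lemma deriv_poly beta x0 y0 a b f G y : Hyps beta x0 y0 a b f G y ->
  forall P, (forall m w, In m P -> In w m -> (length w < beta)%nat) -> forall x, cint x0 a x ->
  has_deriv_within (cint x0 a) (fun s => evalP G P s (y s)) x (evalP G (dpoly P) x (y x)).
Proof.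
  intros HH P; induction P as [|m P IH]; intros HP x Hx.
  - simpl. apply hdw_const.
  - simpl. rewrite evalP_app. apply hdw_plus.
    + apply (deriv_mono beta x0 y0 a b f G y HH); auto.
      intros w Hw; apply (HP m w); simpl; auto.
    + apply IH; auto. intros m' w H1 H2; apply (HP m' w); simpl; auto.
Qed.

Lemma evalM_bound beta x0 y0 a b f G y : Hyps beta x0 y0 a b f G y ->
  forall m, (forall w, In w m -> (length w <= beta)%nat) -> forall x, cint x0 a x ->
  Rabs (evalM G m x (y x)) <= 1.
Proof.
  intros HH m; induction m as [|w m IH]; intros Hm x Hx.
  - simpl. rewrite Rabs_R1; lra.
  - pose proof HH as [_ [Hb [_ [Hp _]]]]. simpl. rewrite Rabs_mult.
    assert (H1 : Rabs (G w x (y x)) <= 1) by (apply Hb; auto; apply Hm; simpl; auto).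
    assert (H2 : Rabs (evalM G m x (y x)) <= 1) by (apply IH; auto; intros; apply Hm; simpl; auto).
    pose proof (Rabs_pos (G w x (y x))). pose proof (Rabs_pos (evalM G m x (y x))).
    nra.
Qed.

Lemma evalP_bound beta x0 y0 a b f G y : Hyps beta x0 y0 a b f G y ->
  forall P, (forall m w, In m P -> In w m -> (length w <= beta)%nat) -> forall x, cint x0 a x ->
  Rabs (evalP G P x (y x)) <= INR (length P).
Proof.
  intros HH P; induction P as [|m P IH]; intros HP x Hx.
  - simpl. rewrite Rabs_R0; lra.
  - simpl length. rewrite S_INR. simpl evalP.
    eapply Rle_trans; [apply Rabs_triang|].
    assert (Rabs (evalM G m x (y x)) <= 1).
    { apply (evalM_bound beta x0 y0 a b f G y HH); auto. intros; eapply HP; simpl; eauto. }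
    assert (Rabs (evalP G P x (y x)) <= INR (length P)).
    { apply IH; auto. intros; eapply HP; simpl; eauto. }
    lra.
Qed.

Lemma evalM_lip beta x0 y0 a b f G y : Hyps beta x0 y0 a b f G y ->
  forall m, (forall w, In w m -> (length w <= beta)%nat) -> forall x x', cint x0 a x -> cint x0 a x' ->
  Rabs (evalM G m x' (y x') - evalM G m x (y x)) <= INR (length m) * (2 * Rabs (x' - x)).
Proof.
  intros HH m; induction m as [|w m IH]; intros Hm x x' Hx Hx'.
  - simpl. replace (1 - 1) with 0 by ring. rewrite Rabs_R0; lra.
  - pose proof HH as [_ [Hb [_ [Hp _]]]].
    simpl length. rewrite S_INR. simpl evalM.
    set (a1 := G w x' (y x')). set (a0 := G w x (y x)).
    set (b1 := evalM G m x' (y x')). set (b0 := evalM G m x (y x)).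
    assert (Hw : (length w <= beta)%nat) by (apply Hm; simpl; auto).
    assert (Ha1 : Rabs a1 <= 1) by (apply Hb; auto).
    assert (Hb0 : Rabs b0 <= 1) by (apply (evalM_bound beta x0 y0 a b f G y HH); auto; intros; apply Hm; simpl; auto).
    assert (Da : Rabs (a1 - a0) <= 2 * Rabs (x' - x)).
    { eapply Rle_trans; [apply (G_lip beta x0 y0 a b f G y HH w Hw); auto|].
      pose proof (y_lip beta x0 y0 a b f G y HH x x' Hx Hx'). lra. }
    assert (Db : Rabs (b1 - b0) <= INR (length m) * (2 * Rabs (x' - x))).
    { apply IH; auto; intros; apply Hm; simpl; auto. }
    replace (a1 * b1 - a0 * b0) with (a1 * (b1 - b0) + (a1 - a0) * b0) by ring.
    eapply Rle_trans; [apply Rabs_triang|]. rewrite !Rabs_mult.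
    pose proof (Rabs_pos a1). pose proof (Rabs_pos b0). pose proof (Rabs_pos (b1 - b0)).
    pose proof (Rabs_pos (a1 - a0)).
    assert (Rabs a1 * Rabs (b1 - b0) <= Rabs (b1 - b0)) by nra.
    assert (Rabs (a1 - a0) * Rabs b0 <= Rabs (a1 - a0)) by nra.
    lra.
Qed.

Lemma evalP_lip beta x0 y0 a b f G y : Hyps beta x0 y0 a b f G y ->
  forall (d : nat) P, (forall m w, In m P -> In w m -> (length w <= beta)%nat) ->
  (forall m, In m P -> (length m <= d)%nat) ->
  forall x x', cint x0 a x -> cint x0 a x' ->
  Rabs (evalP G P x' (y x') - evalP G P x (y x)) <= INR (length P) * (INR d * (2 * Rabs (x' - x))).
Proof.
  intros HH d P; induction P as [|m P IH]; intros HP Hd x x' Hx Hx'.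
  - simpl. replace (0 - 0) with 0 by ring. rewrite Rabs_R0; lra.
  - simpl length. rewrite S_INR. simpl evalP.
    replace (evalM G m x' (y x') + evalP G P x' (y x') - (evalM G m x (y x) + evalP G P x (y x)))
      with ((evalM G m x' (y x') - evalM G m x (y x)) + (evalP G P x' (y x') - evalP G P x (y x))) by ring.
    eapply Rle_trans; [apply Rabs_triang|].
    assert (H1 : Rabs (evalM G m x' (y x') - evalM G m x (y x)) <= INR (length m) * (2 * Rabs (x' - x))).
    { apply (evalM_lip beta x0 y0 a b f G y HH); auto. intros; eapply HP; simpl; eauto. }
    assert (H2 : INR (length m) <= INR d) by (apply le_INR; apply Hd; simpl; auto).
    assert (H3 : Rabs (evalP G P x' (y x') - evalP G P x (y x)) <= INR (length P) * (INR d * (2 * Rabs (x' - x)))).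
    { apply IH; auto; intros; [eapply HP| apply Hd]; simpl; eauto. }
    pose proof (Rabs_pos (x' - x)).
    nra.
Qed.

Lemma dmono_words m n : (forall w, In w m -> (length w <= n)%nat) ->
  forall r w, In r (dmono m) -> In w r -> (length w <= S n)%nat.
Proof.
  induction m as [|w0 m IH]; intros Hm r w Hr Hw; simpl in Hr.
  - contradiction.
  - destruct Hr as [<-|[<-|Hr]].
    + destruct Hw as [<-|Hw]; simpl; [apply le_n_S; apply Hm; simpl; auto|].
      apply le_S; apply Hm; simpl; auto.
    + destruct Hw as [<-|[<-|Hw]]; simpl; [apply le_n_S; apply Hm; simpl; auto| lia|].
      apply le_S; apply Hm; simpl; auto.
    + apply in_map_iff in Hr. destruct Hr as [r' [<- Hr']].
      destruct Hw as [<-|Hw]; [apply le_S; apply Hm; simpl; auto|].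
      apply (IH (fun w' H => Hm w' (or_intror H)) r'); auto.
Qed.

Lemma dmono_len m r : In r (dmono m) -> (length r <= S (length m))%nat.
Proof.
  revert r; induction m as [|w0 m IH]; intros r Hr; simpl in Hr.
  - contradiction.
  - destruct Hr as [<-|[<-|Hr]]; simpl; try lia.
    apply in_map_iff in Hr. destruct Hr as [r' [<- Hr']]. simpl. specialize (IH r' Hr'). lia.
Qed.

Lemma dmono_count m : length (dmono m) = (2 * length m)%nat.
Proof. induction m; simpl; [reflexivity| rewrite length_map, IHm; lia]. Qed.

Lemma dpoly_count P d : (forall m, In m P -> (length m <= d)%nat) ->
  (length (dpoly P) <= 2 * d * length P)%nat.
Proof.
  induction P as [|m P IH]; intros H; simpl; [lia|].
  rewrite length_app, dmono_count.
  assert (length m <= d)%nat by (apply H; simpl; auto).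
  assert (length (dpoly P) <= 2 * d * length P)%nat by (apply IH; intros; apply H; simpl; auto).
  nia.
Qed.

Lemma in_dpoly P r : In r (dpoly P) -> exists m, In m P /\ In r (dmono m).
Proof.
  induction P as [|m P IH]; simpl; [tauto|]. intros H. apply in_app_or in H.
  destruct H as [H|H]; [exists m; auto|]. destruct (IH H) as [m' [? ?]]; exists m'; auto.
Qed.

Lemma Pk_words k m w : In m (Pk k) -> In w m -> (length w <= k)%nat.
Proof.
  revert m w; induction k as [|k IH]; intros m w Hm Hw; simpl in Hm.
  - destruct Hm as [<-|[]]. destruct Hw as [<-|[]]. simpl; lia.
  - destruct (in_dpoly _ _ Hm) as [m' [H1 H2]].
    apply (dmono_words m' k (fun w' H => IH m' w' H1 H) m w); auto.
Qed.

Lemma Pk_len k m : In m (Pk k) -> (length m <= S k)%nat.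
Proof.
  revert m; induction k as [|k IH]; intros m Hm; simpl in Hm.
  - destruct Hm as [<-|[]]. simpl; lia.
  - destruct (in_dpoly _ _ Hm) as [m' [H1 H2]].
    pose proof (dmono_len _ _ H2). pose proof (IH _ H1). lia.
Qed.

Lemma Pk_count k : (length (Pk k) <= 2 ^ k * fact k)%nat.
Proof.
  induction k as [|k IH]; simpl; [lia|].
  pose proof (dpoly_count (Pk k) (S k) (Pk_len k)).
  nia.
Qed.

Theorem lemma3p2 (beta : nat) (x0 y0 a b : R) (f : R -> R -> R)
  (G : list bool -> R -> R -> R) (y : R -> R) :
  0 < a -> 0 < b ->
  cont_on_rect x0 y0 a b f ->
  partials_family x0 y0 a b beta f G ->
  (forall w, (length w <= beta)%nat -> forall x y', rect x0 y0 a b x y' ->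
     Rabs (G w x y') <= 1) ->
  (forall w, length w = beta -> forall x y' x' y'',
     rect x0 y0 a b x y' -> rect x0 y0 a b x' y'' ->
     Rabs (G w x y' - G w x' y'') <= Rmax (Rabs (x - x')) (Rabs (y' - y''))) ->
  (forall x, cint x0 a x -> rect x0 y0 a b x (y x)) ->
  (forall x, cint x0 a x -> has_deriv_within (cint x0 a) y x (f x (y x))) ->
  y x0 = y0 ->
  exists Y : nat -> R -> R,
    (forall x, cint x0 a x -> Y 0%nat x = y x) /\
    (forall k, (k <= beta)%nat -> forall x, cint x0 a x ->
       has_deriv_within (cint x0 a) (Y k) x (Y (S k) x)) /\
    (forall x x', cint x0 (Rmin a b) x -> cint x0 (Rmin a b) x' ->
       (forall k, (1 <= k <= beta + 1)%nat ->
          Rabs (Y k x) <= 2 ^ (k - 1) * INR (fact (k - 1))) /\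
       Rabs (Y (beta + 1)%nat x - Y (beta + 1)%nat x')
         <= 2 ^ (beta + 1) * INR (fact (beta + 1)) * Rabs (x - x')).
Proof.
  intros Ha Hb0 _ HPF Hb HL Hp Hd _.
  assert (HH : Hyps beta x0 y0 a b f G y) by exact (conj HPF (conj Hb (conj HL (conj Hp Hd)))).
  pose proof HPF as [HG0 _].
  exists (fun k x => match k with O => y x | S k' => evalP G (Pk k') x (y x) end).
  split; [reflexivity|]. split.
  - intros k Hk x Hx. destruct k as [|k].
    + eapply hdw_ext; [| |apply (Hd x Hx)]; [reflexivity|].
      simpl. rewrite HG0 by auto. ring.
    + apply (deriv_poly beta x0 y0 a b f G y HH); auto.
      intros m w Hm Hw. pose proof (Pk_words k m w Hm Hw). lia.
  - intros x x' Hx Hx'.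
    assert (Hxa : cint x0 a x) by (unfold cint in *; pose proof (Rmin_l a b); lra).
    assert (Hxa' : cint x0 a x') by (unfold cint in *; pose proof (Rmin_l a b); lra).
    assert (E2 : forall k, INR (2 ^ k * fact k) = 2 ^ k * INR (fact k)).
    { intros k. rewrite mult_INR, pow_INR. simpl INR. replace (1 + 1) with 2 by ring. reflexivity. }
    split.
    + intros k Hk. destruct k as [|k]; [lia|].
      replace (S k - 1)%nat with k by lia.
      eapply Rle_trans.
      * apply (evalP_bound beta x0 y0 a b f G y HH); auto.
        intros m w Hm Hw. pose proof (Pk_words k m w Hm Hw). lia.
      * rewrite <- E2. apply le_INR, Pk_count.
    + rewrite Nat.add_1_r.
      rewrite <- Rabs_Ropp.
      replace (- (evalP G (Pk beta) x (y x) - evalP G (Pk beta) x' (y x')))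
        with (evalP G (Pk beta) x' (y x') - evalP G (Pk beta) x (y x)) by ring.
      eapply Rle_trans.
      * apply (evalP_lip beta x0 y0 a b f G y HH (S beta)); auto.
        -- intros m w Hm Hw. apply (Pk_words beta m w Hm Hw).
        -- intros m Hm. apply (Pk_len beta m Hm).
      * rewrite (Rabs_minus_sym x' x).
        pose proof (le_INR _ _ (Pk_count beta)) as C. rewrite E2 in C.
        pose proof (Rabs_pos (x - x')).
        replace (2 ^ S beta * INR (fact (S beta)) * Rabs (x - x'))
          with (2 ^ beta * INR (fact beta) * (INR (S beta) * (2 * Rabs (x - x')))).
        2:{ change (fact (S beta)) with (S beta * fact beta)%nat. rewrite mult_INR. simpl pow. ring. }
        pose proof (pos_INR (S beta)).
        apply Rmult_le_compat_r; auto. nra.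
Qed.
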